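(* Let $T$ be a hypertree and let $e_1,e_2$ be edges of $T$. Suppose $u_i,v_i\in e_i$ for $i=1,2$, and $d_T(u_1,u_2)=d_T(v_1,v_2)+2$. For $i=1,2$, let $T_i$ be the component of $T-e_i$ containing $u_i$, and let $A_i=\{w\in V(T): d_T(w,u_i)=d_T(w,v_i)\}$. Let $x=x(T)$. Then: (i) $\rho(T)(x_{u_1}-x_{u_2})-\rho(T)(x_{v_1}-x_{v_2})=2(\sigma_T(T_2)-\sigma_T(T_1))+\sigma_T(A_2)-\sigma_T(A_1)$. (ii) If moreover $e_i\setminus\{u_i,v_i\}=\{w_i\}$ and $\deg_T(w_i)=1$ for $i=1,2$, then $(\rho(T)+1)(x_{w_1}-x_{w_2})-\rho(T)(x_{v_1}-x_{v_2})=x_{w_2}-x_{w_1}+\sigma_T(T_2)-\sigma_T(T_1)$ and $\rho(T)(x_{u_1}-x_{u_2})-(\rho(T)+1)(x_{w_1}-x_{w_2})=\sigma_T(T_2)-\sigma_T(T_1)$.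
   Context: A (simple) hypergraph has edges that are subsets of the vertex set of size at least two. A loose path from $v_0$ to $v_p$ of length $p$ is an alternating sequence $(v_0,e_1,v_1,\dots,e_p,v_p)$ of distinct vertices and distinct edges with $v_{i-1},v_i\in e_i$ and $e_i\cap e_j=\emptyset$ whenever $j>i+1$; loose cycles are defined analogously (closed, with non-consecutive edges disjoint). A hypertree is a connected hypergraph (any two vertices joined by a loose path) with no loose cycle. $d_T(u,v)$ is the length of a shortest loose path from $u$ to $v$; $D(T)=(d_T(u,v))$ is the distance matrix, $\rho(T)$ its largest eigenvalue, and $x(T)$ the unique unit positive eigenvector of $D(T)$ for $\rho(T)$ (distance Perron vector). The degree $\deg_T(w)$ is the number of edges containing $w$. $T-e$ is the hypergraph on $V(T)$ with edge set $E(T)\setminus\{e\}$. For $V_1\subseteq V(T)$, $\sigma_T(V_1)=\sum_{v\in V_1}x_v$ with $x=x(T)$; for a subhypergraph $H$, $\sigma_T(H)=\sigma_T(V(H))$. *)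

(* Defs.v *)
From mathcomp Require Import all_boot all_order all_algebra.
Set Implicit Arguments. Unset Strict Implicit. Unset Printing Implicit Defensive.
Import Order.TTheory GRing.Theory Num.Theory.

Section Hypergraph.
Variable n : nat.
Implicit Types (E : {set {set 'I_n}}) (u v w : 'I_n) (e : {set 'I_n}).

Definition simple_hg E : Prop := forall e, e \in E -> 2 <= #|e|.

(* (v_0,e_1,v_1,...,e_p,v_p) is a loose path in E from u to v of length p:
   vs = (v_0..v_p), es = (e_1..e_p) (0-indexed: edge i joins vs_i and vs_(i+1)) *)
Definition loose_path E u v p (vs : (p.+1).-tuple 'I_n) (es : p.-tuple {set 'I_n}) : bool :=
  [&& tnth vs ord0 == u, tnth vs ord_max == v,
      uniq vs, uniq es,
      all (fun e => e \in E) es,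
      [forall i : 'I_p, (tnth vs (widen_ord (leqnSn p) i) \in tnth es i)
                        && (tnth vs (lift ord0 i) \in tnth es i)] &
      [forall i : 'I_p, forall j : 'I_p,
         (i.+1 < j) ==> [disjoint tnth es i & tnth es j]]].

Definition has_loose_path E u v p : bool :=
  [exists vs : (p.+1).-tuple 'I_n, exists es : p.-tuple {set 'I_n}, loose_path E u v vs es].

(* loose cycle (v_0,e_1,v_1,...,e_p,v_0) of length p >= 2: distinct vertices,
   distinct edges, consecutive (cyclically) vertices in each edge,
   non-consecutive (cyclically) edges disjoint *)
Definition loose_cycle E p (vs : p.-tuple 'I_n) (es : p.-tuple {set 'I_n}) : bool :=
  [&& 2 <= p, uniq vs, uniq es,
      all (fun e => e \in E) es,
      [forall i : 'I_p, (tnth vs i \in tnth es i) && (tnth vs (ordS i) \in tnth es i)] &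
      [forall i : 'I_p, forall j : 'I_p,
         [&& i < j, j != i.+1 :> nat & ~~ ((i == 0 :> nat) && (j == p.-1 :> nat))]
         ==> [disjoint tnth es i & tnth es j]]].

Definition hg_connected E : Prop := forall u v, exists p, has_loose_path E u v p.

Definition hypertree E : Prop :=
  [/\ simple_hg E, hg_connected E &
      forall p (vs : p.-tuple 'I_n) (es : p.-tuple {set 'I_n}), ~~ loose_cycle E vs es].

(* d_T(u,v): length of a shortest loose path (a loose path has distinct vertices,
   so its length is < n) *)
Definition hdist E u v : nat := \big[minn/n]_(p < n | has_loose_path E u v p) p.

Definition hdeg E w : nat := #|[set e in E | w \in e]|.

Definition comp_del E e u : {set 'I_n} :=
  [set w | [exists p : 'I_n, has_loose_path (E :\ e) u w p]].

Variable R : rcfType.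
Local Open Scope ring_scope.

Definition distmx E : 'M[R]_n := \matrix_(i, j) (hdist E i j)%:R.

Definition distance_perron E (rho : R) (x : 'cV[R]_n) : Prop :=
  [/\ eigenvalue (distmx E) rho,
      forall mu, eigenvalue (distmx E) mu -> mu <= rho,
      distmx E *m x = rho *: x,
      forall i, 0 < x i 0 &
      \sum_i x i 0 ^+ 2 = 1].

Definition sigma (x : 'cV[R]_n) (V1 : {set 'I_n}) : R := \sum_(v in V1) x v 0.

End Hypergraph.

(* Main.v *)
Require Import Defs.
From mathcomp Require Import all_boot all_order all_algebra.
From mathcomp Require Import zify ring lra.
Import Order.TTheory GRing.Theory Num.Theory.
Set Implicit Arguments. Unset Strict Implicit. Unset Printing Implicit Defensive.


Section Balls.
Variable n : nat.
Implicit Types (F E : {set {set 'I_n}}) (u v w x y z : 'I_n) (e f : {set 'I_n}).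

Definition adj F x y : bool := (x != y) && [exists f in F, (x \in f) && (y \in f)].

Fixpoint ball F v k : {set 'I_n} :=
  if k is k'.+1 then ball F v k' :|: [set y | [exists x in ball F v k', adj F x y]]
  else [set v].

Lemma adj_sym F x y : adj F x y = adj F y x.
Proof.
rewrite /adj eq_sym; congr (_ && _).
apply/existsP/existsP => -[f Hf]; exists f; move: Hf; rewrite andbCA => /andP[-> /andP[-> ->]] //.
Qed.

Lemma ball0 F v : v \in ball F v 0.
Proof. by rewrite /= set11. Qed.

Lemma ball0E F v u : (u \in ball F v 0) = (u == v).
Proof. by rewrite /= in_set1. Qed.

Lemma ballS F v k u : (u \in ball F v k.+1) =
  (u \in ball F v k) || [exists x in ball F v k, adj F x u].
Proof. by rewrite /= in_setU in_set. Qed.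

Lemma ball_mono1 F v k : ball F v k \subset ball F v k.+1.
Proof. by apply/subsetP => u Hu; rewrite ballS Hu. Qed.

Lemma ball_mono F v k m : k <= m -> ball F v k \subset ball F v m.
Proof.
move=> /subnK <-; elim: (m - k) => [|d IH] //.
by apply: subset_trans IH (ball_mono1 _ _ _).
Qed.

Lemma ball_monoP F v k m u : k <= m -> u \in ball F v k -> u \in ball F v m.
Proof. by move=> H; apply/subsetP/ball_mono. Qed.

Lemma ball_step F v k x y : x \in ball F v k -> adj F x y -> y \in ball F v k.+1.
Proof. by move=> Hx Hxy; rewrite ballS; apply/orP; right; apply/existsP; exists x; rewrite Hx. Qed.

Lemma ball_inv F v k y : y \in ball F v k.+1 ->
  y \in ball F v k \/ exists x, x \in ball F v k /\ adj F x y.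
Proof.
rewrite ballS => /orP[->|/existsP[x /andP[Hx Ha]]]; [by left|right; by exists x].
Qed.

Lemma ball_trans F v u w k m : u \in ball F v k -> w \in ball F u m -> w \in ball F v (k + m).
Proof.
move=> Hu; elim: m w => [|m IH] w; first by rewrite ball0E addn0 => /eqP ->.
case/ball_inv => [/IH H|[x [/IH Hx Ha]]].
  by rewrite addnS; apply: ball_monoP H.
by rewrite addnS; apply: ball_step Hx Ha.
Qed.

Lemma ball_adj F x y : adj F x y -> y \in ball F x 1.
Proof. by move=> H; apply: (ball_step (ball0 F x)). Qed.

Lemma ball_sym F v u k : u \in ball F v k -> v \in ball F u k.
Proof.
elim: k u => [|k IH] u; first by rewrite !ball0E eq_sym.
case/ball_inv => [/IH H|[x [/IH Hx Ha]]]; first by apply: ball_monoP H.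
rewrite adj_sym in Ha.
by have := ball_trans (ball_adj Ha) Hx; rewrite add1n.
Qed.

Lemma ball_sub F F' v k : F \subset F' -> ball F v k \subset ball F' v k.
Proof.
move=> sF; elim: k => [|k IH] //=.
apply/setUSS; first exact IH. apply/subsetP => y; rewrite !in_set => /existsP[x /andP[Hx Ha]].
apply/existsP; exists x; rewrite (subsetP IH _ Hx) /=.
move: Ha; rewrite /adj => /andP[-> /existsP[f /andP[Hf H]]]; apply/existsP; exists f.
by rewrite (subsetP sF _ Hf).
Qed.

End Balls.


Section LP.
Variable n : nat.
Implicit Types (F E : {set {set 'I_n}}) (u v w x y z : 'I_n) (e f : {set 'I_n}).

Definition LP F u v (s : seq 'I_n) (t : seq {set 'I_n}) : Prop :=
 size s = (size t).+1 /\ nth v s 0 = u /\ nth v s (size t) = v /\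
     uniq s /\ uniq t /\ all (fun f => f \in F) t /\
     (forall i, i < size t -> (nth v s i \in nth set0 t i) && (nth v s i.+1 \in nth set0 t i)) /\
     (forall i j, i.+1 < j -> j < size t -> [disjoint nth set0 t i & nth set0 t j]).

Lemma hlp_LP F u v p : has_loose_path F u v p <-> exists s t, size t = p /\ LP F u v s t.
Proof.
split.
  case/existsP => vs /existsP[es /andP[H0 /andP[H1 /andP[Hu1 /andP[Hu2 /andP[Hall /andP[Hf Hd]]]]]]].
  exists vs, es; rewrite size_tuple; split => //; split; [|split; [|split; [|split; [|split; [|split; [|split]]]]]].
  - by rewrite !size_tuple.
  - by move/eqP: H0; rewrite (tnth_nth v) /=.
  - move/eqP: H1; by rewrite (tnth_nth v) /= size_tuple.
  - done.
  - done.
  - done.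
  - move=> i; rewrite size_tuple => Hi.
    move/forallP: Hf => /(_ (Ordinal Hi)).
    by rewrite !(tnth_nth v) !(tnth_nth set0) /= /bump /=.
  - move=> i j Hij; rewrite size_tuple => Hj.
    have Hi : i < p by apply: ltn_trans Hj; apply: ltn_trans Hij.
    move/forallP: Hd => /(_ (Ordinal Hi)) /forallP /(_ (Ordinal Hj)) /implyP /(_ Hij).
    by rewrite !(tnth_nth set0).
case=> s [t [Hp [Hs [H0 [H1 [Hu1 [Hu2 [Hall [Hf Hd]]]]]]]]].
have Hs' : size s == p.+1 by rewrite Hs Hp.
have Ht' : size t == p by rewrite Hp.
apply/existsP; exists (Tuple Hs'); apply/existsP; exists (Tuple Ht').
rewrite /loose_path; apply/andP; split; [|apply/andP; split; [|apply/andP; split; [|apply/andP; split; [|apply/andP; split; [|apply/andP; split]]]]]; try by [].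
- by rewrite (tnth_nth v) /= H0.
- by rewrite (tnth_nth v) /= -Hp H1.
- apply/forallP => i; rewrite !(tnth_nth v) !(tnth_nth set0) /= /bump /=.
  by apply: Hf; rewrite Hp.
- apply/forallP => i; apply/forallP => j; apply/implyP => Hij.
  by rewrite !(tnth_nth set0); apply: Hd => //; rewrite Hp.
Qed.

Lemma LP_ball F u v s t i j : LP F u v s t -> i <= j -> j <= size t ->
  nth v s j \in ball F (nth v s i) (j - i).
Proof.
case=> [Hs [H0 [H1 [Hu1 [Hu2 [Hall [Hf Hd]]]]]]] Hij.
elim: j Hij => [|j IH] Hij Hj.
  by move: Hij; rewrite leqn0 => /eqP ->; rewrite ball0.
case: (ltngtP i j.+1) Hij => // [Hij _|<- _]; last by rewrite subnn ball0.
have := IH Hij (ltnW Hj); rewrite subSn // => H.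
apply: ball_step H _.
rewrite /adj; apply/andP; split.
  rewrite nth_uniq ?Hs ?ltnS ?(ltnW Hj) //.
  by rewrite neq_ltn ltnSn.
apply/existsP; exists (nth set0 t j); rewrite Hf // andbT.
by apply: (allP Hall); rewrite mem_nth.
Qed.

Lemma LP_size F u v s t : LP F u v s t -> size t < n.
Proof.
case=> Hs [_ [_ [Hu1 _]]].
have := card_uniqP Hu1; rewrite Hs => <-.
by have := max_card (mem s); rewrite card_ord.
Qed.

End LP.


Section Constr.
Variable n : nat.
Implicit Types (F E : {set {set 'I_n}}) (u v w x y z : 'I_n) (e f : {set 'I_n}).

Lemma ball_edge F f a b : f \in F -> a \in f -> b \in f -> b \in ball F a 1.
Proof.
move=> Hf Ha Hb; case: (eqVneq a b) => [<-|Hab]; first exact: ball_monoP (ball0 _ _).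
apply: ball_adj; rewrite /adj Hab; apply/existsP; exists f; by rewrite Hf Ha Hb.
Qed.

Lemma LP_ball_end F u v s t i : LP F u v s t -> i <= size t ->
  nth v s i \in ball F v (size t - i).
Proof.
move=> H Hi; apply: ball_sym; have := LP_ball H Hi (leqnn _).
by case: H => _ [_ [-> _]].
Qed.

Lemma construct F v k u : u \in ball F v k -> (forall m, m < k -> u \notin ball F v m) ->
  exists s t, size t = k /\ LP F u v s t.
Proof.
elim: k u => [|k IH] u.
  rewrite ball0E => /eqP -> _; exists [:: v], [::]; do !split => //.
case/ball_inv => [Hu|[y [Hy Ha]]] Hmin; first by move/negP: (Hmin k (ltnSn k)).
have Hky : forall m, m < k -> y \notin ball F v m.
  move=> m Hm; apply/negP => Hy'; have := Hmin m.+1; rewrite ltnS Hm => /(_ isT).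
  by rewrite (ball_step Hy' Ha).
have Huk : u \notin ball F v k by apply: Hmin.
have [s [t [Hk HLP]]] := IH y Hy Hky.
move: Ha; rewrite /adj => /andP[Hyu /existsP[f /andP[Hf /andP[Hyf Huf]]]].
have HLP' := HLP.
case: HLP' => [Hs [H0 [H1 [Hu1 [Hu2 [Hall [Hfe Hd]]]]]]].
have Hsk : forall i, i <= size t -> nth v s i \in ball F v (k - i).
  by move=> i Hi; rewrite -Hk; apply: LP_ball_end.
have Hus : u \notin s.
  apply/negP => /(nthP v) [i Hi Hi']; move: Huk; rewrite -Hi'.
  by rewrite (ball_monoP _ (Hsk i _)) // ?leq_subr // -ltnS -Hs.
have Hft : f \notin t.
  apply/negP => /(nthP set0) [i Hi Hi'].
  have := Hfe i Hi; rewrite Hi' => /andP[_ Hsi].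
  have := ball_trans (Hsk i.+1 Hi) (ball_edge Hf Hsi Huf).
  move=> Hb; move: Huk; rewrite (ball_monoP _ Hb) //.
  by rewrite addn1 -Hk subnSK // leq_subr.
exists (u :: s), (f :: t); split; first by rewrite /= Hk.
split; first by rewrite /= Hs.
split; first by [].
split; first exact: H1.
split; first by rewrite /= Hus Hu1.
split; first by rewrite /= Hft Hu2.
split; first by rewrite /= Hf Hall.
split.
  case=> [|i] /=; first by rewrite Huf H0 Hyf.
  by rewrite ltnS; apply: Hfe.
case=> [|i] [|j] //=; last by rewrite !ltnS; apply: Hd.
case: j => [|j] // _; rewrite ltnS => Hj.
rewrite disjoints_subset; apply/subsetP => z Hzf; rewrite in_setC; apply/negP => Hzt.
have := Hfe j.+1 Hj; rewrite /= => /andP[_ Hsj].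
have Htj : nth set0 t j.+1 \in F by apply: (allP Hall); rewrite mem_nth.
have Hb1 := ball_trans (Hsk j.+2 Hj) (ball_edge Htj Hsj Hzt).
have Hb2 := ball_trans Hb1 (ball_edge Hf Hzf Huf).
move: Huk; rewrite (ball_monoP _ Hb2) //.
have Hjk : j.+2 <= k by rewrite -Hk. move: Hjk; clear; lia.
Qed.

End Constr.


Section Dist.
Variable n : nat.
Implicit Types (F E : {set {set 'I_n}}) (u v w x y z : 'I_n) (e f : {set 'I_n}).

Lemma hlp_ball F u v p : has_loose_path F u v p -> u \in ball F v p /\ p < n.
Proof.
case/hlp_LP => s [t [<- H]]; split; last exact: LP_size H.
apply: ball_sym; have := LP_ball H (leq0n (size t)) (leqnn _).
by case: H => _ [-> [-> _]]; rewrite subn0.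
Qed.

Lemma ball_hlp F u v k : u \in ball F v k -> exists2 m, m <= k & has_loose_path F u v m.
Proof.
move=> Hk.
have ex : exists m, u \in ball F v m by exists k.
case: (ex_minnP ex) => m Hm Hmin.
exists m; first exact: Hmin.
apply/hlp_LP; apply: construct Hm _ => j Hj; apply/negP => Hj'.
by have := Hmin j Hj'; rewrite leqNgt Hj.
Qed.

Lemma bigmin_le_seq (I : eqType) (r : seq I) (P : pred I) (G : I -> nat) (d0 : nat) j :
  j \in r -> P j -> \big[minn/d0]_(i <- r | P i) G i <= G j.
Proof.
elim: r => [|a r IH] //; rewrite in_cons big_cons => /orP[/eqP <- ->|Hj Pj].
  exact: geq_minl.
case: (P a); last exact: IH.
by apply: leq_trans (geq_minr _ _) (IH Hj Pj).
Qed.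

Lemma bigmin_gt_seq (I : eqType) (r : seq I) (P : pred I) (G : I -> nat) (d0 k : nat) :
  k < d0 -> (forall i, P i -> k < G i) -> k < \big[minn/d0]_(i <- r | P i) G i.
Proof.
move=> Hd HG; elim: r => [|a r IH]; first by rewrite big_nil.
rewrite big_cons; case Pa: (P a) => //.
by rewrite leq_min HG.
Qed.

Lemma hdist_le_hlp E u v p : has_loose_path E u v p -> hdist E u v <= p.
Proof.
move=> H; have [_ Hp] := hlp_ball H.
exact: (bigmin_le_seq _ _ (mem_index_enum (Ordinal Hp)) H).
Qed.

Lemma hdist_leP E u v k : hg_connected E ->
  (hdist E u v <= k) = (u \in ball E v k).
Proof.
move=> conn; apply/idP/idP; last first.
  by case/ball_hlp => m Hm /hdist_le_hlp H; apply: leq_trans H Hm.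
case: (leqP n k) => Hnk.
  move=> _; have [p Hp] := conn u v; have [Hb Hpn] := hlp_ball Hp.
  by apply: ball_monoP Hb; apply: leq_trans (ltnW Hpn) Hnk.
apply: contraTT => Hu; rewrite -ltnNge /hdist.
apply: bigmin_gt_seq => // p Hp.
have [Hb _] := hlp_ball Hp.
rewrite ltnNge; apply/negP => Hpk.
by move/negP: Hu; apply; apply: ball_monoP Hpk Hb.
Qed.

Lemma hdist_ball E u v : hg_connected E -> u \in ball E v (hdist E u v).
Proof. by move=> conn; rewrite -hdist_leP. Qed.

Lemma hdist_sym E u v : hg_connected E -> hdist E u v = hdist E v u.
Proof.
move=> conn; apply/eqP; rewrite eqn_leq !hdist_leP //.
by apply/andP; split; apply: ball_sym; apply: hdist_ball.
Qed.

End Dist.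


Section Tree.
Variable n : nat.
Implicit Types (F E : {set {set 'I_n}}) (u v w x y z : 'I_n) (e f : {set 'I_n}).

Lemma no_cycle_seq E (s : seq 'I_n) (t : seq {set 'I_n}) (d0 : 'I_n) :
  (forall p (vs : p.-tuple 'I_n) (es : p.-tuple {set 'I_n}), ~~ loose_cycle E vs es) ->
  size t = size s -> 2 <= size s -> uniq s -> uniq t -> all (fun f => f \in E) t ->
  (forall i, i < size s -> (nth d0 s i \in nth set0 t i) && (nth d0 s (i.+1 %% size s) \in nth set0 t i)) ->
  (forall i j, i < j -> j < size s -> j != i.+1 -> ~~ ((i == 0) && (j == (size s).-1)) ->
     [disjoint nth set0 t i & nth set0 t j]) -> False.
Proof.
move=> acyc Hts H2 Hus Hut Hall Hf Hd.
have Ht' : size t == size s by rewrite Hts.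
move/negP: (acyc _ (in_tuple s) (Tuple Ht')); apply.
rewrite /loose_cycle H2 Hus Hut Hall /=.
apply/andP; split.
  apply/forallP => i; rewrite !(tnth_nth d0) !(tnth_nth set0) /=.
  exact: Hf.
apply/forallP => i; apply/forallP => j; apply/implyP => /andP[Hij /andP[Hj1 Hj2]].
rewrite !(tnth_nth set0) /=; apply: Hd => //.
Qed.

Variable E : {set {set 'I_n}}.
Hypothesis HT : hypertree E.
Variable e : {set 'I_n}.
Hypothesis He : e \in E.
Local Notation F := (E :\ e).

Lemma nobypass k x y : x \in e -> y \in e -> x != y -> x \notin ball F y k.
Proof.
case: HT => _ conn acyc.
elim/ltn_ind: k x y => k IH x y Hx Hy Hxy; apply/negP => Hb.
have Hmin : forall m, m < k -> x \notin ball F y m by move=> m Hm; apply: IH.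
have [s [t [Hk HLP]]] := construct Hb Hmin.
have HLP' := HLP.
case: HLP' => [Hs [H0 [H1 [Hu1 [Hu2 [Hall [Hfe Hd]]]]]]].
have Hk0 : 0 < k.
  case: k Hb {IH Hmin Hk} => // Hb; move: Hxy; rewrite ball0E in Hb; by rewrite Hb.
have HtF : forall i, i < size t -> nth set0 t i \in F.
  by move=> i Hi; apply: (allP Hall); rewrite mem_nth.
apply: (@no_cycle_seq E s (rcons t e) y acyc).
- by rewrite size_rcons Hs.
- by rewrite Hs Hk.
- exact: Hu1.
- rewrite rcons_uniq Hu2 andbT; apply/negP => /(allP Hall); by rewrite !inE eqxx.
- rewrite all_rcons He /=; apply/allP => f /(allP Hall); by rewrite !inE => /andP[].
- move=> i; rewrite Hs ltnS leq_eqVlt => /orP[/eqP ->|Hi].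
    rewrite nth_rcons ltnn eqxx modnn H1 H0 Hx Hy //.
  rewrite nth_rcons Hi modn_small ?ltnS //; exact: Hfe.
- move=> i j Hij; rewrite Hs ltnS leq_eqVlt => /orP[/eqP Hj|Hj] Hj1 Hj2; last first.
    rewrite !nth_rcons Hj (ltn_trans Hij Hj); apply: Hd => //.
    by rewrite ltn_neqAle eq_sym Hj1 Hij.
  have Hit : i < size t by rewrite -Hj.
  rewrite !nth_rcons Hit Hj ltnn eqxx.
  have Hi1 : 0 < i by move: Hj2; rewrite Hj eqxx andbT lt0n.
  have Hi2 : i.+1 < size t by rewrite -Hj ltn_neqAle eq_sym Hj1 Hij.
  rewrite disjoints_subset; apply/subsetP => z Hzt; rewrite in_setC; apply/negP => Hze.
  have Hti := HtF i (ltn_trans (ltnSn _) Hi2).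
  have /andP[Hsi Hsi1] := Hfe i (ltn_trans (ltnSn _) Hi2).
  case: (eqVneq z y) => [Hzy|Hzy].
    subst z.
    have Hb1 := ball_sym (ball_edge Hti Hsi Hzt).
    have Hb2 : nth y s i \in ball F x i.
      by have := LP_ball HLP (leq0n i) (ltnW (ltn_trans (ltnSn _) Hi2)); rewrite H0 subn0.
    have := ball_trans Hb1 (ball_sym Hb2).
    by apply/negP; apply: IH => //; rewrite add1n -Hk.
  have Hb1 := LP_ball_end HLP (ltnW Hi2).
  have Hb2 := ball_trans Hb1 (ball_edge Hti Hsi1 Hzt).
  move: Hb2; apply/negP; apply: IH => //.
  rewrite -Hk; move: Hi1 Hi2; clear; lia.
Qed.


Lemma comp_delE c w : (w \in comp_del E e c) <-> exists k, w \in ball F c k.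
Proof.
rewrite /comp_del in_set; split.
  case/existsP => p /hlp_ball [Hb _]; exists p; exact: ball_sym.
case=> k /ball_sym /ball_hlp [m _ Hm]; apply/existsP.
have [_ Hmn] := hlp_ball Hm; by exists (Ordinal Hmn).
Qed.

Lemma comp_disj c c' w k m : c \in e -> c' \in e -> w \in ball F c k -> w \in ball F c' m -> c = c'.
Proof.
move=> Hc Hc' Hw Hw'; apply/eqP; apply/negPn/negP => Hcc.
have := ball_trans Hw (ball_sym Hw').
by apply/negP; apply: nobypass => //; rewrite eq_sym.
Qed.

Lemma cover_tree c0 w : c0 \in e -> exists2 c, c \in e & exists k, w \in ball F c k.
Proof.
case: HT => _ conn _ Hc0.
have := ball_sym (hdist_ball c0 w conn); move: (hdist E c0 w) => K.
elim: K w => [|K IH] w.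
  rewrite ball0E => /eqP ->; exists c0 => //; exists 0; exact: ball0.
case/ball_inv => [/IH //|[x [/IH [c Hc [m Hm]] /andP[Hxw /existsP[f /andP[Hf /andP[Hxf Hwf]]]]]]].
case: (eqVneq f e) => [Hfe|Hfe].
  subst f; exists w => //; exists 0; exact: ball0.
exists c => //; exists (m + 1); apply: (ball_trans Hm); apply: (ball_edge (f := f)) => //.
by rewrite !inE Hfe Hf.
Qed.

Lemma key c c' k w : c \in e -> c' \in e -> c' != c -> (exists m, w \in ball F c m) ->
  w \in ball E c' k -> 0 < k /\ w \in ball E c k.-1.
Proof.
move=> Hc Hc' Hcc.
elim: k w => [|k IH] w [m Hm].
  rewrite ball0E => /eqP Hw; subst w.
  by move/negP: (nobypass m Hc' Hc Hcc) => /(_ Hm).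
case/ball_inv => [Hw|[x [Hx Hxw]]].
  have [Hk Hw'] := IH w (ex_intro (fun j => w \in ball F c j) m Hm) Hw; split => //.
  by apply: ball_monoP Hw'; apply: leq_pred.
split => //=.
move: (Hxw); rewrite /adj => /andP[Hxw' /existsP[f /andP[Hf /andP[Hxf Hwf]]]].
case: (eqVneq f e) => [Hfe|Hfe].
  subst f; case: (eqVneq w c) => [->|Hwc]; first exact: ball_monoP (ball0 _ _).
  by move/negP: (nobypass m Hwf Hc Hwc) => /(_ Hm).
have HfF : f \in F by rewrite !inE Hfe Hf.
have Hx' : x \in ball F c (m + 1) by apply: ball_trans Hm (ball_edge HfF Hwf Hxf).
have [Hk Hxc] := IH x (ex_intro (fun j => x \in ball F c j) _ Hx') Hx.
case: k {IH Hx} Hk Hxc => // k _ Hxc.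
exact: ball_step Hxc Hxw.
Qed.

Lemma hdist_key c c' w : c \in e -> c' \in e -> c' != c -> w \in comp_del E e c ->
  hdist E c' w = (hdist E c w).+1.
Proof.
case: (HT) => _ conn _ Hc Hc' Hcc /comp_delE Hw.
apply/eqP; rewrite eqn_leq; apply/andP; split.
  rewrite hdist_leP //; rewrite -addn1.
  exact: ball_trans (hdist_ball c w conn) (ball_edge He Hc Hc').
have [Hk Hwc] := key Hc Hc' Hcc Hw (ball_sym (hdist_ball c' w conn)).
have : hdist E c w <= (hdist E c' w).-1 by rewrite hdist_leP //; exact: ball_sym.
by case: (hdist E c' w) Hk.
Qed.

End Tree.


Section Final.
Variable n : nat.
Variable E : {set {set 'I_n}}.
Hypothesis HT : hypertree E.
Variable e : {set 'I_n}.
Hypothesis He : e \in E.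

Lemma conn_of : hg_connected E. Proof. by case: HT. Qed.

Lemma hdist_adj_le f (a b w : 'I_n) : f \in E -> a \in f -> b \in f ->
  hdist E w a <= hdist E w b + 1.
Proof.
move=> Hf Ha Hb; rewrite hdist_leP; last exact: conn_of.
rewrite addnC; exact: ball_trans (ball_edge Hf Ha Hb) (hdist_ball w b conn_of).
Qed.

Lemma cover' c0 (w : 'I_n) : c0 \in e -> exists2 c, c \in e & w \in comp_del E e c.
Proof.
move=> Hc0; have [c Hc Hw] := cover_tree HT w Hc0; exists c => //.
exact/comp_delE.
Qed.

Lemma memC c c' (w : 'I_n) : c \in e -> c' \in e -> w \in comp_del E e c ->
  (w \in comp_del E e c') = (c' == c).
Proof.
move=> Hc Hc' Hw; apply/idP/eqP => [Hw'|->] //.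
have [k Hk] := (comp_delE _ _ _ _).1 Hw.
have [m Hm] := (comp_delE _ _ _ _).1 Hw'.
exact: (comp_disj HT He Hc' Hc Hm Hk).
Qed.

Lemma deg1 w1 (w : 'I_n) : hdeg E w1 = 1%N -> w1 \in e -> w \in comp_del E e w1 -> w = w1.
Proof.
move=> Hdeg Hw1 /comp_delE [k]; elim: k w => [|k IH] w.
  by rewrite ball0E => /eqP.
case/ball_inv => [/IH //|[z [/IH -> /andP[Hne /existsP[f /andP[Hf /andP[H1f Hwf]]]]]]].
exfalso; move: Hf; rewrite !inE => /andP[Hfe HfE].
have : #|[set e; f]| <= hdeg E w1.
  apply: subset_leq_card; apply/subsetP => g; rewrite !inE => /orP[]/eqP ->;
  by rewrite ?He ?Hw1 ?HfE ?H1f.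
by rewrite cards2 eq_sym Hfe Hdeg.
Qed.

Local Open Scope ring_scope.
Variable R : rcfType.

Lemma pt_diff (a b w : 'I_n) : a \in e -> b \in e -> a != b ->
  (hdist E a w)%:R - (hdist E b w)%:R =
  ((w \in comp_del E e b)%:R - (w \in comp_del E e a)%:R :> R).
Proof.
move=> Ha Hb Hab; have [c Hc Hw] := cover' w Ha.
rewrite (memC Hc Ha Hw) (memC Hc Hb Hw).
case: (eqVneq a c) => [Hac|Hac]; case: (eqVneq b c) => [Hbc|Hbc].
- by move: Hab; rewrite Hac Hbc eqxx.
- subst c; rewrite (hdist_key HT He Ha Hb Hbc Hw) -addn1 natrD /=; lra.
- subst c; rewrite (hdist_key HT He Hb Ha Hac Hw) -addn1 natrD /=; lra.
- rewrite (hdist_key HT He Hc Ha Hac Hw) (hdist_key HT He Hc Hb Hbc Hw) /=; lra.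
Qed.

Lemma pt_A (a b w : 'I_n) : a \in e -> b \in e -> a != b ->
  (w \in [set w | hdist E w a == hdist E w b])%:R + (w \in comp_del E e a)%:R
   + (w \in comp_del E e b)%:R = 1 :> R.
Proof.
move=> Ha Hb Hab; have [c Hc Hw] := cover' w Ha.
rewrite in_set (hdist_sym w a conn_of) (hdist_sym w b conn_of).
rewrite (memC Hc Ha Hw) (memC Hc Hb Hw).
case: (eqVneq a c) => [Hac|Hac]; case: (eqVneq b c) => [Hbc|Hbc].
- by move: Hab; rewrite Hac Hbc eqxx.
- subst c; rewrite (hdist_key HT He Ha Hb Hbc Hw) (ltn_eqF (ltnSn _)) /=; lra.
- subst c; rewrite (hdist_key HT He Hb Ha Hac Hw) (gtn_eqF (ltnSn _)) /=; lra.
- rewrite (hdist_key HT He Hc Ha Hac Hw) (hdist_key HT He Hc Hb Hbc Hw) eqxx /=; lra.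
Qed.


Lemma sigma_ind (x : 'cV[R]_n) (C : {set 'I_n}) :
  sigma x C = \sum_w (w \in C)%:R * x w 0.
Proof.
rewrite /sigma big_mkcond /=; apply: eq_bigr => w _.
by case: (w \in C); rewrite ?mul1r ?mul0r.
Qed.

Lemma rho_diff (rho : R) (x : 'cV[R]_n) (a b : 'I_n) : distance_perron E rho x ->
  rho * x a 0 - rho * x b 0 = \sum_w ((hdist E a w)%:R - (hdist E b w)%:R) * x w 0.
Proof.
case=> _ _ Hev _ _.
have Hc : forall c : 'I_n, rho * x c 0 = \sum_w (hdist E c w)%:R * x w 0.
  move=> c; have := congr1 (fun M : 'cV[R]_n => M c 0) Hev.
  rewrite !mxE => <-; apply: eq_bigr => w _; by rewrite mxE.
rewrite !Hc -sumrB; apply: eq_bigr => w _; by rewrite mulrBl.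
Qed.

Lemma side_diff (rho : R) (x : 'cV[R]_n) (a b : 'I_n) : distance_perron E rho x ->
  a \in e -> b \in e -> a != b ->
  rho * x a 0 - rho * x b 0 = sigma x (comp_del E e b) - sigma x (comp_del E e a).
Proof.
move=> Hp Ha Hb Hab; rewrite rho_diff // !sigma_ind -sumrB.
by apply: eq_bigr => w _; rewrite pt_diff // mulrBl.
Qed.

Lemma sum3 (x : 'cV[R]_n) (A B C : {set 'I_n}) :
  (forall w, (w \in A)%:R + (w \in B)%:R + (w \in C)%:R = 1 :> R) ->
  sigma x A + sigma x B + sigma x C = \sum_w x w 0.
Proof.
move=> H; rewrite !sigma_ind -!big_split /=; apply: eq_bigr => w _.
by rewrite -!mulrDl H mul1r.
Qed.

Lemma side_A (x : 'cV[R]_n) (a b : 'I_n) : a \in e -> b \in e -> a != b ->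
  sigma x [set w | hdist E w a == hdist E w b] + sigma x (comp_del E e a)
   + sigma x (comp_del E e b) = \sum_w x w 0.
Proof. by move=> Ha Hb Hab; apply: sum3 => w; apply: pt_A. Qed.

End Final.

Unset Implicit Arguments.
Local Open Scope ring_scope.

Lemma alg_i (R : rcfType) (rho pu1 pv1 pu2 pv2 t1 t2 c1 c2 A1 A2 S : R) :
  rho * pu1 - rho * pv1 = c1 - t1 -> rho * pu2 - rho * pv2 = c2 - t2 ->
  A1 + t1 + c1 = S -> A2 + t2 + c2 = S ->
  rho * (pu1 - pu2) - rho * (pv1 - pv2) = 2 * (t2 - t1) + A2 - A1.
Proof. rewrite !mulrBr; lra. Qed.

Lemma alg_ii1 (R : rcfType) (rho pw1 pv1 pw2 pv2 t1 t2 c1 c2 S : R) :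
  rho * pw1 - rho * pv1 = c1 - pw1 -> rho * pw2 - rho * pv2 = c2 - pw2 ->
  t1 + c1 + pw1 = S -> t2 + c2 + pw2 = S ->
  (rho + 1) * (pw1 - pw2) - rho * (pv1 - pv2) = pw2 - pw1 + t2 - t1.
Proof. rewrite mulrDl mul1r !mulrBr; lra. Qed.

Lemma alg_ii2 (R : rcfType) (rho pu1 pw1 pu2 pw2 t1 t2 : R) :
  rho * pu1 - rho * pw1 = pw1 - t1 -> rho * pu2 - rho * pw2 = pw2 - t2 ->
  rho * (pu1 - pu2) - (rho + 1) * (pw1 - pw2) = t2 - t1.
Proof. rewrite mulrDl mul1r !mulrBr; lra. Qed.

Theorem lemma2p1 (R : rcfType) (n : nat) (E : {set {set 'I_n}})
  (rho : R) (x : 'cV[R]_n) (e1 e2 : {set 'I_n}) (u1 v1 u2 v2 : 'I_n) :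
  hypertree E ->
  distance_perron E rho x ->
  e1 \in E -> e2 \in E ->
  u1 \in e1 -> v1 \in e1 -> u2 \in e2 -> v2 \in e2 ->
  hdist E u1 u2 = (hdist E v1 v2 + 2)%N ->
  let T1 := comp_del E e1 u1 in
  let T2 := comp_del E e2 u2 in
  let A1 := [set w | hdist E w u1 == hdist E w v1] in
  let A2 := [set w | hdist E w u2 == hdist E w v2] in
  (rho * (x u1 0 - x u2 0) - rho * (x v1 0 - x v2 0)
     = 2 * (sigma x T2 - sigma x T1) + sigma x A2 - sigma x A1)
  /\
  (forall w1 w2 : 'I_n,
     e1 :\: [set u1; v1] = [set w1] -> e2 :\: [set u2; v2] = [set w2] ->
     hdeg E w1 = 1%N -> hdeg E w2 = 1%N ->
     (rho + 1) * (x w1 0 - x w2 0) - rho * (x v1 0 - x v2 0)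
       = x w2 0 - x w1 0 + sigma x T2 - sigma x T1
     /\
     rho * (x u1 0 - x u2 0) - (rho + 1) * (x w1 0 - x w2 0)
       = sigma x T2 - sigma x T1).
Proof.
move=> HT Hp He1 He2 Hu1 Hv1 Hu2 Hv2 Hd T1 T2 A1 A2.
have Huv1 : u1 != v1.
  apply/eqP => Heq; subst v1.
  have := hdist_adj_le HT u1 He2 Hu2 Hv2; rewrite Hd.
  by rewrite leq_add2l.
have Huv2 : u2 != v2.
  apply/eqP => Heq; subst v2.
  have := hdist_adj_le HT u2 He1 Hu1 Hv1.
  rewrite (hdist_sym u2 u1 (conn_of HT)) (hdist_sym u2 v1 (conn_of HT)) Hd.
  by rewrite leq_add2l.
have s1 := side_diff HT He1 Hp Hu1 Hv1 Huv1.
have s2 := side_diff HT He2 Hp Hu2 Hv2 Huv2.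
have a1 := side_A HT He1 x Hu1 Hv1 Huv1.
have a2 := side_A HT He2 x Hu2 Hv2 Huv2.
split.
  exact: alg_i s1 s2 a1 a2.
move=> w1 w2 Hs1 Hs2 Hdeg1 Hdeg2.
have side : forall (e : {set 'I_n}) u v w, e \in E -> u \in e -> v \in e -> u != v ->
    e :\: [set u; v] = [set w] -> hdeg E w = 1%N ->
    [/\ rho * x w 0 - rho * x v 0 = sigma x (comp_del E e v) - x w 0,
        rho * x u 0 - rho * x w 0 = x w 0 - sigma x (comp_del E e u) &
        sigma x (comp_del E e u) + sigma x (comp_del E e v) + x w 0 = \sum_i x i 0].
  move=> e u v w He Hu Hv Huv Hs Hdeg.
  have : w \in [set w] by rewrite set11.
  rewrite -Hs !inE negb_or => /andP[/andP[Hwu Hwv] Hw].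
  have Cw : comp_del E e w = [set w].
    apply/setP => z; rewrite in_set1; apply/idP/eqP => [Hz|->].
      exact: (deg1 He Hdeg Hw Hz).
    by apply/comp_delE; exists 0%N; apply: ball0.
  have sw : sigma x (comp_del E e w) = x w 0 by rewrite Cw /sigma big_set1.
  have Hin : forall c, c \in e -> [|| c == u, c == v | c == w].
    move=> c Hc; case: (eqVneq c u) => //= Hcu; case: (eqVneq c v) => //= Hcv.
    have : c \in e :\: [set u; v] by rewrite !inE Hc (negbTE Hcu) (negbTE Hcv).
    by rewrite Hs in_set1.
  split.
  - by rewrite (side_diff HT He Hp Hw Hv Hwv) sw.
  - have Huw : u != w by rewrite eq_sym.
    by rewrite (side_diff HT He Hp Hu Hw Huw) sw.
  - rewrite -sw; apply: sum3 => z.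
    have [c Hc Hz] := cover' HT z Hu.
    rewrite (memC HT He Hc Hu Hz) (memC HT He Hc Hv Hz) (memC HT He Hc Hw Hz).
    case/or3P: (Hin c Hc) => /eqP Hceq; subst c.
    + rewrite eqxx [v == u]eq_sym (negbTE Huv) (negbTE Hwu) /=.
      by rewrite addr0 addr0.
    + rewrite eqxx (negbTE Huv) (negbTE Hwv) /=.
      by rewrite addr0 add0r.
    + rewrite eqxx [u == w]eq_sym [v == w]eq_sym (negbTE Hwu) (negbTE Hwv) /=.
      by rewrite add0r add0r.
have [t1 t2 t3] := side e1 u1 v1 w1 He1 Hu1 Hv1 Huv1 Hs1 Hdeg1.
have [r1 r2 r3] := side e2 u2 v2 w2 He2 Hu2 Hv2 Huv2 Hs2 Hdeg2.
rewrite /T1 /T2; split; [exact: alg_ii1 t1 r1 t3 r3 | exact: alg_ii2 t2 r2].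
Qed.
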